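(* Suppose each interface function $g_k$ belongs to $C^2[0,L_x]$ and $\varepsilon$ is piecewise constant (constant on each $\Omega_k$). Then there is a constant $C_9>0$ independent of $h$ such that $$\sum_{j=1}^{S}\operatorname{meas}\big(\operatorname{supp}_{S_j}|\varepsilon-\varepsilon_h|\big)\le C_9 h.$$
   Context: $H,L_x>0$, $\Omega=(0,L_x)\times(-H,H)$. There are $I\ge1$ interfaces given by $g_k:[0,L_x]\to\mathbb R$ ($k=1,\dots,I$) whose graphs are separated from each other and from $x_2=\pm H$ by some $\delta>0$; $\Omega_k$ ($k=1,\dots,I+1$) is the region of $\Omega$ between the graphs of $g_{k-1}$ and $g_k$ ($g_0\equiv -H$, $g_{I+1}\equiv H$). $\varepsilon:\Omega\to\mathbb C$ is the relative permittivity. Slices: $-H=h_0<h_1<\dots<h_S=H$, $S_j=\{(x_1,x_2)\in\Omega:h_{j-1}\le x_2<h_j\}$, $\Delta h_j=h_j-h_{j-1}$, $h=\max_j\Delta h_j$, with $h/\min_j\Delta h_j\le C_\Delta$ for a fixed constant $C_\Delta>0$, and every point where $g_k'=0$ lies on an inter-slice line $x_2=h_j$. The stairstep approximation is $\varepsilon_h(x_1,x_2)=\varepsilon(x_1,h_{j-1/2})$ on $S_j$, $h_{j-1/2}=(h_{j-1}+h_j)/2$. $\operatorname{supp}_{S_j}|\varepsilon-\varepsilon_h|$ is the set of points of $S_j$ where $\varepsilon\ne\varepsilon_h$, and meas is Lebesgue measure. *)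

(* Defs.v *)
From HB Require Import structures.
From mathcomp Require Import all_boot all_order all_algebra.
From mathcomp Require Import all_classical all_reals all_analysis.
From mathcomp Require Import complex.
Set Implicit Arguments. Unset Strict Implicit. Unset Printing Implicit Defensive.
Import Order.TTheory GRing.Theory Num.Theory.
Import numFieldNormedType.Exports.
Local Open Scope classical_set_scope.
Local Open Scope ring_scope.

Section Defs.
Variable R : realType.

Definition deriv_within_at (a b : R) (f : R -> R) (x l : R) : Prop :=
  (fun t : R => t^-1 * (f (x + t) - f x)) @
     (within [set t : R | a <= x + t <= b] (0:R)^') --> l.

Definition C2_on (a b : R) (f : R -> R) : Prop :=
  exists f1 f2 : R -> R,
    (forall x, a <= x <= b -> deriv_within_at a b f x (f1 x)) /\
    (forall x, a <= x <= b -> deriv_within_at a b f1 x (f2 x)) /\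
    {within [set x | a <= x <= b], continuous f2}.

Definition gext (H : R) (I : nat) (g : nat -> R -> R) (k : nat) (x : R) : R :=
  if k == 0%N then - H else if k == I.+1 then H else g k x.

Definition Omega (H Lx : R) : set (R * R) :=
  [set p | 0 < p.1 < Lx /\ - H < p.2 < H].

Definition Omega_k (H Lx : R) (I : nat) (g : nat -> R -> R) (k : nat)
  : set (R * R) :=
  [set p | Omega H Lx p /\
     gext H I g k.-1 p.1 < p.2 < gext H I g k p.1].

Definition slice (H Lx : R) (hs : nat -> R) (j : nat) : set (R * R) :=
  [set p | Omega H Lx p /\ hs j.-1 <= p.2 < hs j].

Definition hmid (hs : nat -> R) (j : nat) : R := (hs j.-1 + hs j) / 2.

(* stairstep approximation: eps_h (x1,x2) = eps (x1, h_{j-1/2}) on S_j *)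
Definition supp_diff (H Lx : R) (eps : R * R -> R[i]) (hs : nat -> R) (j : nat)
  : set (R * R) :=
  [set p | slice H Lx hs j p /\ eps p != eps (p.1, hmid hs j)].

Definition hmax (S : nat) (hs : nat -> R) : R :=
  \big[Num.max/0]_(1 <= j < S.+1) (hs j - hs j.-1).

Definition meas2 : set (R * R) -> \bar R :=
  (@lebesgue_measure R \x @lebesgue_measure R)%E.

End Defs.

(* Main.v *)
Require Import Defs.
From HB Require Import structures.
From mathcomp Require Import all_boot all_order all_algebra.
From mathcomp Require Import all_classical all_reals all_analysis.
From mathcomp Require Import complex.
From mathcomp Require Import ring lra zify measurable_realfun.
Import Order.TTheory GRing.Theory Num.Theory.
Import numFieldNormedType.Exports.
Local Open Scope classical_set_scope.
Local Open Scope ring_scope.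
Lemma deriv_derivable (R : realType) (Lx : R) (f : R -> R) x l :
  0 < x < Lx -> deriv_within_at 0 Lx f x l -> derivable f x 1.
Proof.
move=> /andP[x0 xL] hd.
have nA : nbhs (0:R) [set t : R | 0 <= x + t <= Lx].
  apply/nbhs_ballP; exists (Num.min x (Lx - x)).
    by rewrite /= lt_min x0 subr_gt0 xL.
  move=> t; rewrite /ball /= sub0r normrN lt_min => /andP[t1 t2].
  have h1 : t <= `|t| := ler_norm t.
  have h2 : -t <= `|t| by rewrite -normrN ler_norm.
  apply/andP; split; lra.
apply/cvg_ex; exists l.
have -> : (fun h : R => h^-1 *: (f (h *: 1 + x) - f x)) =
          (fun t : R => t^-1 * (f (x + t) - f x)).
  apply/funext => h /=; change (h%:A) with (h * 1); rewrite mulr1 (addrC h x). reflexivity.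
move=> P /hd; rewrite /within /=.
move=> hP; have n' : \forall t \near (0:R)^', [set t : R | 0 <= x + t <= Lx] t.
  exact: cvg_within.
by move: hP; apply: filterS2 n' => t At; apply.
Qed.


Lemma C2_meas (R : realType) (Lx : R) (f : R -> R) :
  C2_on 0 Lx f -> measurable_fun `]0, Lx[ f.
Proof.
move=> [f1 [f2 [d1 _]]].
apply: subspace_continuous_measurable_fun => //.
apply: derivable_within_continuous => x; rewrite in_itv /= => /andP[x0 xL].
apply: (@deriv_derivable R Lx f x (f1 x)); first by rewrite x0 xL.
by apply: d1; rewrite (ltW x0) (ltW xL).
Qed.

Lemma le_int_any d (T : measurableType d) (R : realType)
  (mu : {measure set T -> \bar R}) (f g : T -> \bar R) :
  (forall x, (0 <= f x)%E) -> (forall x, (f x <= g x)%E) ->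
  (\int[mu]_x f x <= \int[mu]_x g x)%E.
Proof.
move=> f0 fg.
have g0 x : (0 <= g x)%E by apply: le_trans (f0 x) (fg x).
rewrite !ge0_integralE// !patch_setT.
apply: ereal_sup_le => _ [h hf <-]; exists h => //= x.
exact: le_trans (hf x) (fg x).
Qed.

Lemma region (R : realType) (H Lx : R) I (g : nat -> R -> R) delta
  (eps : R * R -> R[i]) x y m :
  0 < delta ->
  (forall k x, (k <= I)%N -> 0 <= x <= Lx ->
     gext H I g k x + delta <= gext H I g k.+1 x) ->
  (forall k, (1 <= k <= I.+1)%N -> exists c : R[i],
     forall p, Omega_k H Lx I g k p -> eps p = c) ->
  0 < x < Lx -> -H < y < H -> -H < m < H ->
  (forall k, (1 <= k <= I)%N -> ~ (Num.min y m <= g k x <= Num.max y m)) ->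
  eps (x, y) = eps (x, m).
Proof.
move=> d0 sep cst xr yr mr nok.
set G := fun k => gext H I g k x.
have x01 : 0 <= x <= Lx by case/andP: xr => a b; rewrite !ltW.
have Gs k : (k <= I)%N -> G k < G k.+1.
  move=> kI; have := sep k x kI x01; rewrite /G; lra.
have Gmono0 n k : (k + n.+1 <= I.+1)%N -> G k < G (k + n.+1)%N.
  elim: n => [|n IH] h; first by rewrite addn1; apply: Gs; rewrite -ltnS -addn1.
  apply: lt_trans (IH _) _; first by apply: leq_trans h; rewrite leq_add2l.
  rewrite (addnS k n.+1); apply: Gs; rewrite -ltnS; apply: leq_trans h.
  lia.
have Gmono k l : (k < l <= I.+1)%N -> G k < G l.
  case/andP=> kl lI; have := Gmono0 (l - k).-1 k.
  by rewrite prednK ?subn_gt0 // subnKC ?(ltnW kl) //; apply.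
have Gle k l : (k <= l <= I.+1)%N -> G k <= G l.
  case/andP=> kl lI; move: kl; rewrite leq_eqVlt => /orP[/eqP->//|kl].
  by apply/ltW/Gmono; rewrite kl lI.
have GI k : (1 <= k <= I)%N -> G k = g k x.
  case/andP=> k1 kI; rewrite /G /gext.
  have -> : (k == 0%N) = false by apply/negbTE; rewrite -lt0n.
  by have -> : (k == I.+1) = false by apply/negbTE; rewrite neq_ltn ltnS kI.
have G0 : G 0%N = - H by [].
have GS : G I.+1 = H by rewrite /G /gext /= eqxx.
have idx z : -H < z < H -> (forall k, (1 <= k <= I)%N -> g k x != z) ->
    exists a, (1 <= a <= I.+1)%N /\ G a.-1 < z < G a.
  move=> zr nz.
  have exP : exists n, (0 < n)%N && (z < G n) by exists I.+1; rewrite GS; case/andP: zr => _ ->.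
  case: (ex_minnP exP) => a /andP[a0 za] amin.
  have aI : (a <= I.+1)%N by apply: amin; rewrite GS; case/andP: zr => _ ->.
  exists a; split; first by rewrite a0 aI.
  rewrite za andbT.
  case a1: (a.-1 == 0%N); first by rewrite (eqP a1) G0; case/andP: zr.
  have a1' : (1 <= a.-1)%N by rewrite lt0n a1.
  have aI' : (a.-1 <= I)%N by rewrite -ltnS prednK.
  rewrite lt_neqAle; apply/andP; split.
    by rewrite GI ?a1' ?aI' //; apply: nz; rewrite a1' aI'.
  rewrite leNgt; apply/negP => h.
  have := amin a.-1; rewrite a1' h => /(_ isT).
  by rewrite -ltnS prednK // ltnn.
have inO z a : -H < z < H -> (1 <= a <= I.+1)%N -> G a.-1 < z < G a ->
    Omega_k H Lx I g a (x, z).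
  by move=> zr ar Gz; split => //; split.
have nzy k : (1 <= k <= I)%N -> g k x != y.
  move=> kr; apply/eqP => e; apply: (nok k kr); rewrite e.
  by rewrite ge_min le_max lexx.
have nzm k : (1 <= k <= I)%N -> g k x != m.
  move=> kr; apply/eqP => e; apply: (nok k kr); rewrite e.
  by rewrite ge_min le_max lexx !orbT.
have [a [ar ay]] := idx y yr nzy.
have [b [br bm]] := idx m mr nzm.
have [ca hca] := cst a ar.
have [cb hcb] := cst b br.
have ey := hca _ (inO _ _ yr ar ay).
have em := hcb _ (inO _ _ mr br bm).
case: (ltngtP a b) => ab.
- exfalso; apply: (nok a).
    by case/andP: ar => -> _; rewrite -ltnS; apply: leq_trans ab _; case/andP: br.
  rewrite -GI; last by case/andP: ar => -> _; rewrite -ltnS; apply: leq_trans ab _; case/andP: br.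
  have h1 : G a <= G b.-1.
    apply: Gle; rewrite -ltnS prednK ?ab //=; last by case/andP: br.
    by apply: leq_trans (leq_pred _) _; case/andP: br.
  case/andP: ay => _ h2; case/andP: bm => h3 _.
  apply/andP; split.
    by rewrite ge_min; apply/orP; left; apply: ltW.
  by rewrite le_max; apply/orP; right; apply: le_trans h1 (ltW h3).
- exfalso; apply: (nok b).
    by case/andP: br => -> _; rewrite -ltnS; apply: leq_trans ab _; case/andP: ar.
  rewrite -GI; last by case/andP: br => -> _; rewrite -ltnS; apply: leq_trans ab _; case/andP: ar.
  have h1 : G b <= G a.-1.
    apply: Gle; rewrite -ltnS prednK ?ab //=; last by case/andP: ar.
    by apply: leq_trans (leq_pred _) _; case/andP: ar.
  case/andP: bm => _ h2; case/andP: ay => h3 _.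
  apply/andP; split.
    by rewrite ge_min; apply/orP; right; apply: ltW.
  by rewrite le_max; apply/orP; left; apply: le_trans h1 (ltW h3).
- by rewrite ey (hca _ (inO _ _ mr ar _)) // ab.
Qed.

Lemma sum_atmost1 (R : realType) (s : seq nat) (F : nat -> R) :
  uniq s -> (forall j, 0 <= F j <= 1) ->
  (forall i j, i \in s -> j \in s -> F i != 0 -> F j != 0 -> i = j) ->
  \sum_(j <- s) F j <= 1.
Proof.
move=> us F01 Fu.
case: (pselect (exists j, j \in s /\ F j != 0)) => [[j0 [js nz]]|hn].
  rewrite (bigD1_seq j0) //= big1_seq ?addr0; first by case/andP: (F01 j0).
  move=> i /andP[ij0 iS]; apply/eqP; apply: contraNT ij0 => nzi.
  by apply/eqP; apply: Fu.
rewrite big1_seq // => i iS; apply/eqP; apply: contraT => nzi.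
by exfalso; apply: hn; exists i.
Qed.

Lemma le_leb_any (R : realType) (A B : set R) : A `<=` B -> (lebesgue_measure A <= lebesgue_measure B)%E.
Proof.
move=> AB. rewrite /lebesgue_measure /lebesgue_stieltjes_measure /measure_extension.
exact: le_outer_measure.
Qed.

Lemma slice_unique (R : realType) S (hs : nat -> R) (v : R) i j :
  (forall a b, (a <= b <= S)%N -> hs a <= hs b) ->
  (1 <= i <= S)%N -> (1 <= j <= S)%N ->
  hs i.-1 <= v < hs i -> hs j.-1 <= v < hs j -> i = j.
Proof.
move=> mono ir jr /andP[a1 a2] /andP[b1 b2].
case: (ltngtP i j) => // ij; exfalso.
- have : hs i <= hs j.-1 by apply: mono; lia.
  lra.
- have : hs j <= hs i.-1 by apply: mono; lia.
  lra.
Qed.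

Theorem lemma5 (R : realType) (H Lx : R) (I : nat) (g : nat -> R -> R)
  (delta : R) (eps : R * R -> R[i]) (C_Delta : R) :
  0 < H -> 0 < Lx -> (1 <= I)%N ->
  0 < delta ->
  (forall k x, (k <= I)%N -> 0 <= x <= Lx ->
     gext H I g k x + delta <= gext H I g k.+1 x) ->
  (forall k, (1 <= k <= I)%N -> C2_on 0 Lx (g k)) ->
  (forall k, (1 <= k <= I.+1)%N -> exists c : R[i],
     forall p, Omega_k H Lx I g k p -> eps p = c) ->
  0 < C_Delta ->
  exists C9 : R, 0 < C9 /\
    forall (S : nat) (hs : nat -> R),
      hs 0%N = - H -> hs S = H ->
      (forall j, (j < S)%N -> hs j < hs j.+1) ->
      (forall j, (1 <= j <= S)%N -> hmax S hs <= C_Delta * (hs j - hs j.-1)) ->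
      (forall k x, (1 <= k <= I)%N -> 0 <= x <= Lx ->
         deriv_within_at 0 Lx (g k) x 0 ->
         exists j, (j <= S)%N /\ g k x = hs j) ->
      (\sum_(1 <= j < S.+1) meas2 (supp_diff H Lx eps hs j)
         <= (C9 * hmax S hs)%:E)%E.
Proof.
move=> H0 Lx0 I1 d0 sep C2 cst _.
exists (I%:R * Lx); split; first by rewrite mulr_gt0 // ltr0n.
move=> S hs hs0 hsS hinc _ _.
set hm := hmax S hs.
have hsmono0 i n : (i + n <= S)%N -> hs i <= hs (i + n)%N.
  elim: n => [|n IH] h; first by rewrite addn0.
  apply: le_trans (IH _) _; first lia.
  by rewrite addnS; apply/ltW/hinc; lia.
have hsmono i j : (i <= j <= S)%N -> hs i <= hs j.
  move=> /andP[ij jS]; have := hsmono0 i (j - i)%N; rewrite subnKC //; exact.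
have hsj j : (1 <= j <= S)%N -> -H <= hs j.-1 /\ hs j.-1 < hs j /\ hs j <= H.
  move=> jr; split; first by rewrite -hs0; apply: hsmono; lia.
  split; last by rewrite -hsS; apply: hsmono; lia.
  by have := hinc j.-1; rewrite prednK; [apply; lia|lia].
have hm0 : 0 <= hm.
  rewrite /hm /hmax; elim: (index_iota 1 S.+1) => [|a s IH]; first by rewrite big_nil.
  by rewrite big_cons le_max IH orbT.
have hmj j : (1 <= j <= S)%N -> hs j - hs j.-1 <= hm.
  move=> jr; rewrite /hm /hmax.
  have : j \in index_iota 1 S.+1 by rewrite mem_index_iota; lia.
  elim: (index_iota 1 S.+1) => [|a s IH] //.
  rewrite inE big_cons le_max => /orP[/eqP->|js]; first by rewrite lexx.
  by rewrite IH // orbT.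
pose E k j : set R := `]0, Lx[ `&` [set x | (1 <= k <= I)%N /\ hs j.-1 <= g k x < hs j].
have mE k j : measurable (E k j).
  case kr: (1 <= k <= I)%N.
    have -> : E k j = `]0, Lx[ `&` g k @^-1` `[hs j.-1, hs j[.
      apply/seteqP; split => x /=; rewrite /E /= !in_itv /= kr.
        by move=> [-> [_ ->]].
      by move=> [-> ->].
    by apply: (@C2_meas R Lx (g k) (C2 k kr)) => //; exact: measurable_itv.
  rewrite (_ : E k j = set0) //; apply/seteqP; split => x //=.
  by rewrite /E /= kr => -[_ []].
pose f j x := (hm * \sum_(1 <= k < I.+1) \1_(E k j) x)%:E.
have mf j : measurable_fun setT (f j).
  apply/measurable_EFinP; apply: measurable_funM; first exact: measurable_cst.
  by apply: measurable_sum => k; exact: measurable_indic.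
have f0 j x : (0 <= f j x)%E.
  rewrite lee_fin mulr_ge0 // sumr_ge0 // => k _.
have stepA j : (1 <= j <= S)%N ->
  (meas2 (supp_diff H Lx eps hs j) <= \int[lebesgue_measure]_x f j x)%E.
  move=> jr; have [ha [hab hb]] := hsj j jr.
  set A := supp_diff H Lx eps hs j.
  rewrite /meas2 /product_measure1.
  apply: le_int_any => [x|x]; first exact: measure_ge0.
  rewrite /=.
  case: (pselect (exists y, xsection A x y)) => [[y hy]|hn]; last first.
    rewrite (_ : xsection A x = set0); first by rewrite measure0.
    by apply/seteqP; split => // y hy; apply: hn; exists y.
  have sec : xsection A x `<=` `[hs j.-1, hs j[.
    by move=> z; rewrite /xsection /= inE => -[[_ hz] _]; rewrite /= in_itv /=.
  move: hy; rewrite /xsection /= inE => -[[[/= xr yr] hy] hne].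
  have mr : hs j.-1 < hmid hs j < hs j by rewrite /hmid; apply/andP; split; lra.
  have [k [kr hk]] : exists k, (1 <= k <= I)%N /\ hs j.-1 <= g k x < hs j.
    apply: contrapT => nk; move/negP: hne; apply; apply/eqP.
    apply: (@region R H Lx I g delta eps x y (hmid hs j) d0 sep cst xr yr).
      by case/andP: mr => m1 m2; apply/andP; split; lra.
    move=> k kr hk; apply: nk; exists k; split => //.
    move: hk; rewrite ge_min le_max => /andP[/orP[h1|h1] /orP[h2|h2]];
      case/andP: hy => y1 y2; case/andP: mr => m1 m2; apply/andP; split; lra.
  have hle := le_leb_any R _ _ sec.
  refine (le_trans hle _); rewrite lebesgue_measure_itv.
  rewrite /= lte_fin hab -EFinD.
  unfold f.
  rewrite lee_fin.
  have h1 := hmj j jr.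
  have kin : k \in index_iota 1 I.+1 by rewrite mem_index_iota; case/andP: kr => k1 k2; apply/andP; split.
  have h2 : 1 <= \sum_(1 <= k0 < I.+1) \1_(E k0 j) x :> R.
    rewrite (bigD1_seq k kin (iota_uniq _ _)) /=.
    have -> : \1_(E k j) x = 1 :> R by rewrite indicE mem_set.
    by rewrite lerDl sumr_ge0 // => i _; rewrite indicE ler0n.
  have h3 : hm <= hm * \sum_(1 <= k0 < I.+1) \1_(E k0 j) x by apply: ler_peMr.
  lra.
apply: (@le_trans _ _ (\sum_(1 <= j < S.+1) \int[lebesgue_measure]_x f j x)%E).
  rewrite big_nat [X in (_ <= X)%E]big_nat; apply: lee_sum => j jr; exact: stepA.
rewrite -ge0_integral_sum //.
have hC : (\int[lebesgue_measure]_x (\sum_(1 <= j < S.+1) f j x) <=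
   \int[lebesgue_measure]_x ((hm * I%:R) * \1_`]0, Lx[%classic x)%:E)%E.
  apply: le_int_any => x; first by apply: sume_ge0 => j _; exact: f0.
  rewrite /f sumEFin lee_fin -mulr_sumr -mulrA ler_wpM2l //.
  rewrite exchange_big /=.
  have each k : \sum_(1 <= j < S.+1) \1_(E k j) x <= \1_`]0, Lx[%classic x :> R.
    case xO: (x \in `]0, Lx[%classic).
      rewrite indicE xO; apply: sum_atmost1; first exact: iota_uniq.
        by move=> j; rewrite indicE; case: (_ \in _); rewrite /= ?mulr1n ?mulr0n ?lexx ?ler01.
      move=> i j; rewrite !mem_index_iota !ltnS !indicE => ir jr.
      case: (boolP (x \in E k i)) => [/set_mem [_ [_ hi]]|]; last by rewrite eqxx.
      case: (boolP (x \in E k j)) => [/set_mem [_ [_ hj]]|]; last by rewrite eqxx.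
      move=> _ _; exact: (slice_unique R S hs (g k x) i j hsmono ir jr hi hj).
    rewrite big1 ?indicE ?xO // => j _; rewrite indicE.
    case: (boolP (x \in E k j)) => // /set_mem [xO' _].
    by move: xO; rewrite mem_set.
  apply: le_trans (ler_sum _ (fun k _ => each k)) _.
  by rewrite sumr_const_nat subn1 /= mulr_natl.
refine (le_trans hC _).
have -> : (\int[lebesgue_measure]_x (hm * I%:R * \1_`]0, Lx[%classic x)%:E =
  \int[lebesgue_measure]_x ((hm * I%:R)%:E * (\1_`]0, Lx[%classic x)%:E))%E.
  by apply: eq_integral => x _; rewrite EFinM.
rewrite ge0_integralZl_EFin //; first last.
- by rewrite mulr_ge0 // ler0n.
- by apply/measurable_EFinP; exact: measurable_indic.
rewrite integral_indic // setIT.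
have hL : lebesgue_measure (`]0%R, Lx[%classic : set R) = Lx%:E.
  by rewrite lebesgue_measure_itv /= lte_fin Lx0 sube0.
match goal with |- context [(_ * ?M)%E] => have -> : M = Lx%:E by exact: hL end.
rewrite -EFinM lee_fin.
have -> : hm * I%:R * Lx = I%:R * Lx * hm by ring.
done.
Qed.
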